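(* Let $\mu\in\mathcal{L}$. If $\mu$ has an atom at $x\in\mathbb{R}$, then $W(\mu)$ has an atom at $e^{-ix}$ with $W(\mu)(\{e^{-ix}\})=\mu(\{x\})$. Conversely, if $e^{-ix}$ is an atom of $W(\mu)$, then there is a unique $n\in\mathbb{Z}$ such that $\mu$ has an atom at $x+2\pi n$, and $\mu(\{x+2\pi n\})=W(\mu)(\{e^{-ix}\})$.
   Context: For a probability measure $\mu$ on $\mathbb{R}$, $G_\mu(z)=\int\frac{d\mu(x)}{z-x}$ and $F_\mu=1/G_\mu$ on the upper half-plane $\mathbb{C}^+$. $\mathcal{L}$ is the set of probability measures $\mu$ on $\mathbb{R}$ with $F_\mu(z+2\pi)=F_\mu(z)+2\pi$ for all $z\in\mathbb{C}^+$. $W(\mu)$ is the probability measure on the unit circle obtained as the push-forward of $\mu$ under $x\mapsto e^{-ix}$. *)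

(* Defs.v *)
From HB Require Import structures.
From mathcomp Require Import all_boot all_order all_algebra.
From mathcomp Require Import all_classical all_reals all_analysis.
From mathcomp Require Import complex.
Set Implicit Arguments. Unset Strict Implicit. Unset Printing Implicit Defensive.
Import Order.TTheory GRing.Theory Num.Theory.
Import numFieldNormedType.Exports.
Local Open Scope classical_set_scope.
Local Open Scope ring_scope.
Local Open Scope complex_scope.

Section Defs.
Variable R : realType.

(* Cauchy transform G_mu(z) = int dmu(x)/(z-x), written through its real and
   imaginary parts: for z = a + i b,
   1/(z-x) = (a-x)/((a-x)^2+b^2) - i b/((a-x)^2+b^2). *)
Definition cauchyG (mu : probability R R) (z : R[i]) : R[i] :=
  let a := complex.Re z in let b := complex.Im z in
  (Rintegral mu setT (fun x : R => (a - x) / ((a - x) ^+ 2 + b ^+ 2)))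
  +i* (- Rintegral mu setT (fun x : R => b / ((a - x) ^+ 2 + b ^+ 2))).

Definition reciprocalF (mu : probability R R) (z : R[i]) : R[i] :=
  (cauchyG mu z)^-1.

Definition inL (mu : probability R R) : Prop :=
  forall z : R[i], 0 < complex.Im z ->
    reciprocalF mu (z + (2 * pi)%:C) = reciprocalF mu z + (2 * pi)%:C.

(* e^{-ix}, a point of the unit circle in C = R^2 (coordinates (Re, Im)). *)
Definition expmi (x : R) : R * R := (cos x, - sin x).

Definition Wmap (mu : probability R R) : set (R * R) -> \bar R :=
  pushforward mu expmi.

End Defs.

(* Main.v *)
Require Import Defs.
From HB Require Import structures.
From mathcomp Require Import all_boot all_order all_algebra.
From mathcomp Require Import all_classical all_reals all_analysis.
From mathcomp Require Import complex.
From mathcomp Require Import measurable_realfun.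
From mathcomp Require Import lra.
Import Order.TTheory GRing.Theory Num.Theory.
Import numFieldNormedType.Exports.
Local Open Scope classical_set_scope.
Local Open Scope ring_scope.

Section C.
Variable R : realType.
Lemma ReAdd (z : R[i]) (c : R) : complex.Re (z + c%:C)%C = complex.Re z + c.
Proof. by case: z. Qed.

Lemma twopi_nat (k : nat) : 2 * pi * k%:R = (pi *+ 2) *+ k :> R.
Proof. by rewrite -[RHS]mulr_natr -[X in _ = X * _]mulr_natr (mulrC pi). Qed.

Lemma expmi_nat (x : R) (k : nat) : expmi (x + 2 * pi * k%:R) = expmi x.
Proof.
by rewrite /expmi twopi_nat (periodicn (@cosD2pi R)) (periodicn (@sinD2pi R)).
Qed.

Lemma expmi_int (x : R) (n : int) : expmi (x + 2 * pi * n%:~R) = expmi x.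
Proof.
case: n => k; first exact: expmi_nat.
rewrite -[LHS](expmi_nat _ k.+1); congr expmi.
rewrite NegzE -addrA -mulrDr intrN addNr mulr0 addr0 //. Qed.

Lemma cos_eq1_0 (r : R) : 0 <= r < pi *+ 2 -> cos r = 1 -> r = 0.
Proof.
move=> /andP[r0 r2] c1.
have [rpi|pir] := lerP r pi.
  apply: cos_inj; rewrite ?cos0 // in_itv /= ?r0 ?rpi ?lexx ?pi_ge0 //.
have : cos (pi *+ 2 - r) = 1 by rewrite addrC cosD2pi cosN.
move=> c2; have : pi *+ 2 - r = 0.
  apply: cos_inj; rewrite ?cos0 // in_itv /= ?lexx ?pi_ge0 //.
  by rewrite subr_ge0 ltW //= lerBlDl mulr2n lerD2r ltW.
by move/eqP; rewrite subr_eq0 => /eqP rE; move: r2; rewrite rE ltxx.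
Qed.

Lemma expmi_eq (x t : R) : expmi t = expmi x -> exists n : int, t = x + 2 * pi * n%:~R.
Proof.
case=> ct /eqP; rewrite eqr_opp => /eqP st.
have cd : cos (t - x) = 1.
  by rewrite cosD cosN sinN ct st mulrN opprK -!expr2 cos2Dsin2.
have p2 : 0 < pi *+ 2 :> R by rewrite pmulrn_rgt0 // pi_gt0.
set n := Num.floor ((t - x) / (pi *+ 2)).
exists n.
have := floor_itv ((t - x) / (pi *+ 2)); rewrite -/n => /andP[h1 h2].
set r := t - x - (pi *+ 2) * n%:~R.
have r0 : 0 <= r < pi *+ 2.
  rewrite /r subr_ge0 ltrBlDl.
  rewrite ler_pdivlMr // in h1; rewrite ltr_pdivrMr // intrD mulrDl mul1r in h2.
  by rewrite !(mulrC (pi *+ 2)) h1 h2.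
have cr : cos r = 1.
  have := congr1 fst (expmi_int (t - x) (- n)); rewrite /= cd => <-.
  by rewrite /r -[pi *+ 2]mulr_natl intrN mulrN.
have := @cos_eq1_0 r r0 cr; rewrite /r => /eqP; rewrite subr_eq0 subr_eq => /eqP ->.
by rewrite addrC -[pi *+ 2]mulr_natl.
Qed.

Lemma mf (p y : R) : 0 < y -> measurable_fun setT (fun t : R => y / ((p - t) ^+ 2 + y ^+ 2)).
Proof.
move=> y0; apply: continuous_measurable_fun => t.
have c1 : {for t, continuous (fun t : R => p - t)}.
  apply: continuousB. exact: cst_continuous. exact: cvg_id.
have c2 : {for t, continuous (fun t : R => (p - t) ^+ 2)}.
  exact: (@continuous_comp _ _ _ (fun t => p - t) (fun u => u ^+ 2) t c1 (@exprn_continuous _ 2 _)).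
have c3 : {for t, continuous (fun t : R => (p - t) ^+ 2 + y ^+ 2)}.
  apply: continuousD. exact: c2. exact: cst_continuous.
have c4 : {for t, continuous (fun t : R => ((p - t) ^+ 2 + y ^+ 2)^-1)}.
  apply: continuousV c3.
  by rewrite gt_eqF // ltr_pwDr ?exprn_gt0 ?sqr_ge0.
have h0 : {for t, continuous (fun=> y : R)} by exact: cst_continuous.
have := continuousM h0 c4. exact.
Qed.

Lemma atom_fin (mu : probability R R) (p : R) : mu [set p] = (fine (mu [set p]))%:E.
Proof.
rewrite fineK // ge0_fin_numE ?measure_ge0 //.
by rewrite (le_lt_trans (probability_le1 _ _)) ?ltry.
Qed.

Lemma Ibound (mu : probability R R) (p y : R) : 0 < y ->
  ((fine (mu [set p]) / y)%:E <= integral mu setT (fun t : R => (y / ((p - t) ^+ 2 + y ^+ 2))%:E)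
  /\ integral mu setT (fun t : R => (y / ((p - t) ^+ 2 + y ^+ 2))%:E) <= (y^-1)%:E)%E.
Proof.
move=> y0.
have mF : measurable_fun setT (fun t : R => (y / ((p - t) ^+ 2 + y ^+ 2))%:E).
  by apply/measurable_EFinP; exact: mf.
have F0 : forall t, (0 <= (y / ((p - t) ^+ 2 + y ^+ 2))%:E)%E.
  by move=> t; rewrite lee_fin divr_ge0 ?addr_ge0 ?sqr_ge0 ?(ltW y0).
split.
  apply: (@le_trans _ _ (integral mu [set p] (fun t : R => (y / ((p - t) ^+ 2 + y ^+ 2))%:E))).
    rewrite (@eq_integral _ _ _ mu [set p] (cst (y^-1)%:E)); last first.
      move=> t; rewrite inE /= => ->.
      by rewrite subrr expr0n add0r /= expr2 invfM mulrA divff ?mul1r // gt_eqF.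
    by rewrite integral_cst // [X in (_ <= _ * X)%E](atom_fin mu p) -EFinM mulrC.
  apply: ge0_subset_integral => //.
rewrite (@le_trans _ _ (integral mu setT (cst (y^-1)%:E))) //.
  apply: ge0_le_integral => //.
  move=> t _; rewrite lee_fin ler_pdivrMr ?ler_pdivlMl //.
    by rewrite -expr2 lerDr sqr_ge0.
  by rewrite ltr_pwDr ?exprn_gt0 ?sqr_ge0.
rewrite integral_cst // -[leRHS]mule1; apply: lee_wpmul2l.
  by rewrite lee_fin invr_ge0 ltW.
exact: probability_le1.
Qed.

Lemma ReF_bound (mu : probability R R) (p y : R) : 0 < y -> (0 < mu [set p])%E ->
  (fine (mu [set p]) * complex.Re (reciprocalF mu (p +i* y)%C)) ^+ 2 <= y ^+ 2.
Proof.
move=> y0 m0.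
have a0 : 0 < fine (mu [set p]) by rewrite -lte_fin -atom_fin.
set a := fine (mu [set p]) in a0 *.
have [h1 h2] := @Ibound mu p y y0.
set X := integral _ _ _ in h1 h2.
have X0 : (0 <= X)%E.
  by apply: le_trans h1; rewrite lee_fin divr_ge0 // ltW.
have Xf : X \is a fin_num.
  by rewrite ge0_fin_numE // (le_lt_trans h2) ?ltry.
have hI : a / y <= fine X.
  by rewrite -lee_fin fineK.
rewrite /reciprocalF /cauchyG /=.
rewrite /Rintegral -/X.
set U := fine _.
set I := fine X in hI *.
have ay : a <= I * y by rewrite -ler_pdivrMr.
have I0 : 0 < I by apply: lt_le_trans hI; rewrite divr_gt0.
have D0 : 0 < U ^+ 2 + I ^+ 2 by rewrite ltr_wpDl ?sqr_ge0 ?exprn_gt0.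
rewrite sqrrN exprMn expr_div_n mulrA ler_pdivrMr ?exprn_gt0 //.
have e1 : a ^+ 2 <= (I * y) ^+ 2.
  by rewrite !expr2; apply: ler_pM => //; exact: ltW.
have e2 : (I * U) ^+ 2 <= (U ^+ 2 + I ^+ 2) ^+ 2.
  rewrite -subr_ge0 exprMn !expr2. nra.
apply: (le_trans (ler_wpM2r (sqr_ge0 U) e1)).
rewrite exprMn mulrAC [_ * y ^+ 2]mulrC -exprMn.
by apply: ler_wpM2l; rewrite ?sqr_ge0 // -exprMn mulrC.
Qed.

Lemma Fiter (mu : probability R R) (hmu : inL mu) (k : nat) (z : R[i]) :
  0 < complex.Im z ->
  reciprocalF mu (z + (2 * pi * k%:R)%:C)%C = reciprocalF mu z + (2 * pi * k%:R)%:C%C.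
Proof.
move=> z0; elim: k => [|k IH]; first by rewrite mulr0 rmorph0 !addr0.
have -> : forall P : R, P * k.+1%:R = P * k%:R + P.
  by move=> P; rewrite mulrSr mulrDr mulr1.
rewrite (_ : (2 * pi * k%:R + 2 * pi)%:C%C = (2 * pi * k%:R)%:C%C + (2 * pi)%:C%C :> R[i]);
  last by rewrite rmorphD.
rewrite !addrA hmu ?IH //.
by move: z0; case: (z) => a b /=; rewrite addr0.
Qed.

Lemma arith_aux (r c : R) : r ^+ 2 <= 1 -> (r + c) ^+ 2 <= 1 -> 2 < c -> False.
Proof.
rewrite !expr2 => h1 h2 h3.
have : -1 <= r by nra.
have : r + c <= 1 by nra.
lra.
Qed.

Lemma no_two_atoms (mu : probability R R) (hmu : inL mu) (p : R) (k : nat) :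
  (0 < k)%N -> (0 < mu [set p])%E -> (0 < mu [set (p + 2 * pi * k%:R)%R])%E -> False.
Proof.
move=> k0 ma mb.
set q := p + 2 * pi * k%:R in mb.
have a0 : 0 < fine (mu [set p]) by rewrite -lte_fin -atom_fin.
have b0 : 0 < fine (mu [set q]) by rewrite -lte_fin -atom_fin.
set a := fine (mu [set p]) in a0.
set b := fine (mu [set q]) in b0.
set y := Num.min a b.
have y0 : 0 < y by rewrite lt_min a0 b0.
have ya : y <= a by rewrite ge_min lexx.
have yb : y <= b by rewrite ge_min lexx orbT.
have h1 := @ReF_bound mu p y y0 ma.
have h2 := @ReF_bound mu q y y0 mb.
have E : (q +i* y)%C = ((p +i* y) + (2 * pi * k%:R)%:C)%C.
  by apply/eqP; rewrite eq_complex /= addr0 !eqxx.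
rewrite E Fiter // ReAdd in h2.
rewrite -/a in h1; rewrite -/b in h2.
set r := complex.Re (reciprocalF mu (p +i* y)%C) in h1 h2.
set c := 2 * pi * k%:R in h2.
have c2 : 2 < c.
  have pk : 2 <= pi * k%:R :> R.
    rewrite -[X in X <= _]mulr1; apply: ler_pM => //; first exact: pi_ge2.
    by rewrite ler1n.
  rewrite /c -mulrA -[X in X < _]mulr1 ltr_pM2l //.
  by apply: lt_le_trans pk; rewrite ltr1n.
have r1 : r ^+ 2 <= 1.
  have : (a * r) ^+ 2 <= a ^+ 2 * 1.
    rewrite mulr1 (le_trans h1) // !expr2; apply: ler_pM => //; exact: ltW.
  by rewrite exprMn ler_pM2l ?exprn_gt0.
have s1 : (r + c) ^+ 2 <= 1.
  have : (b * (r + c)) ^+ 2 <= b ^+ 2 * 1.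
    rewrite mulr1 (le_trans h2) // !expr2; apply: ler_pM => //; exact: ltW.
  by rewrite exprMn ler_pM2l ?exprn_gt0.
exact: (@arith_aux r c r1 s1 c2).
Qed.

Lemma measurable_pre (x : R) : measurable ((@expmi R) @^-1` [set expmi x]).
Proof.
have -> : (@expmi R) @^-1` [set expmi x] =
    (setT `&` cos @^-1` [set cos x]) `&` (setT `&` sin @^-1` [set sin x]).
  apply/seteqP; split => t /=.
    by rewrite /expmi => -[-> /eqP]; rewrite eqr_opp => /eqP ->.
  by move=> [[_ c] [_ s]]; rewrite /expmi c s.
apply: measurableI.
  by apply: (continuous_measurable_fun (@continuous_cos R)) => //; exact: measurable_set1.
by apply: (continuous_measurable_fun (@continuous_sin R)) => //; exact: measurable_set1.
Qed.

Lemma cover (x s : R) : expmi s = expmi x ->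
  exists k : nat, s = x + 2 * pi * k%:R \/ s = x - 2 * pi * k%:R.
Proof.
move=> /expmi_eq [[k|k] ->]; first by exists k; left.
by exists k.+1; right; rewrite NegzE intrN mulrN.
Qed.

Lemma null_other (mu : probability R R) (hmu : inL mu) (t0 s : R) :
  (0 < mu [set t0])%E -> expmi s = expmi t0 -> s != t0 -> mu [set s] = 0%E.
Proof.
move=> m0 /expmi_eq [n sE] st.
apply/eqP; rewrite eq_le measure_ge0 andbT leNgt; apply/negP => ms.
case: n sE => k sE.
  case: k sE => [|k] sE.
    by move: st; rewrite sE mulr0 addr0 eqxx.
  by apply: (@no_two_atoms mu hmu t0 k.+1 erefl m0); rewrite -sE.
have := @no_two_atoms mu hmu s k.+1 erefl ms.
by apply; rewrite sE NegzE intrN mulrN -addrA addNr addr0.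
Qed.

Lemma negl_pt (mu : probability R R) (B : set R) (s : R) :
  B `<=` [set s] -> (B s -> mu [set s] = 0%E) -> mu.-negligible B.
Proof.
move=> Bs h; have [Bs'|nB] := pselect (B s).
  by exists [set s]; split; [exact: measurable_set1 | exact: h | ].
exists set0; split => // t Bt; apply: nB; by rewrite -(Bs t Bt).
Qed.

Lemma Wmap_atom (mu : probability R R) (hmu : inL mu) (t0 : R) :
  (0 < mu [set t0])%E -> Wmap mu [set expmi t0] = mu [set t0].
Proof.
move=> m0; rewrite /Wmap /pushforward.
set A := (@expmi R) @^-1` [set expmi t0].
have mA : measurable A := measurable_pre t0.
rewrite (measureDI mu mA (measurable_set1 t0)).
have -> : A `&` [set t0] = [set t0] by apply/setIidr => t /= ->.
rewrite [X in (X + _)%E](_ : _ = 0%E) ?add0e //.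
apply: measure_negligible; first exact: measurableD mA (measurable_set1 t0).
pose G1 k := [set s | s = t0 + 2 * pi * k%:R /\ A s /\ s <> t0].
pose G2 k := [set s | s = t0 - 2 * pi * k%:R /\ A s /\ s <> t0].
apply: (negligibleS (A := \bigcup_k (G1 k `|` G2 k))).
  move=> s [As /= st]; have [k [sE|sE]] := @cover t0 s As.
    by exists k => //; left.
  by exists k => //; right.
apply: negligible_bigcup => k; apply: negligibleU.
  apply: (@negl_pt mu _ (t0 + 2 * pi * k%:R)); first by move=> s [].
  move=> [_ [As st]]; apply: (@null_other mu hmu t0 _ m0 As); exact/eqP.
apply: (@negl_pt mu _ (t0 - 2 * pi * k%:R)); first by move=> s [].
move=> [_ [As st]]; apply: (@null_other mu hmu t0 _ m0 As); exact/eqP.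
Qed.
End C.

Theorem proposition4p12 (R : realType) (mu : probability R R) (hmu : inL mu)
  (x : R) :
  (((0 < mu [set x])%E ->
      (0 < Wmap mu [set expmi x])%E /\ Wmap mu [set expmi x] = mu [set x])
  /\
  ((0 < Wmap mu [set expmi x])%E ->
      exists n : int,
        [/\ (0 < mu [set (x + 2 * pi * n%:~R)%R])%E,
            mu [set (x + 2 * pi * n%:~R)%R] = Wmap mu [set expmi x]
          & forall m : int, (0 < mu [set (x + 2 * pi * m%:~R)%R])%E -> m = n])).
Proof.
split.
  move=> m0; have := @Wmap_atom R mu hmu x m0 => ->; by split.
move=> W0.
have [[n nP]|nex] := pselect (exists n : int, (0 < mu [set (x + 2 * pi * n%:~R)%R])%E);
  last first.
  exfalso; move: W0; rewrite /Wmap /pushforward.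
  set A := (@expmi R) @^-1` [set expmi x].
  have mA : measurable A := @measurable_pre R x.
  have null : forall n : int, mu [set (x + 2 * pi * n%:~R)%R] = 0%E.
    move=> n; apply/eqP; rewrite eq_le measure_ge0 andbT leNgt; apply/negP => h.
    by apply: nex; exists n.
  rewrite (_ : mu A = 0%E) ?ltxx //.
  apply: measure_negligible => //.
  apply: (negligibleS (A := \bigcup_k ([set x + 2 * pi * k%:R] `|` [set x - 2 * pi * k%:R]))).
    move=> s As; have [k [sE|sE]] := @cover R x s As.
      by exists k => //; left.
    by exists k => //; right.
  apply: negligible_bigcup => k; apply: negligibleU.
    exists [set x + 2 * pi * k%:R]; split; [exact: measurable_set1 | exact: (null (Posz k)) | by []].
  exists [set x - 2 * pi * k%:R]; split; [exact: measurable_set1 | | by []].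
  have := null (- (Posz k)); by rewrite intrN mulrN.
exists n; split => //.
  by rewrite -[in RHS](@expmi_int R x n) (@Wmap_atom R mu hmu _ nP).
move=> m mP; apply/eqP; apply/negP => /negP mn.
have := @null_other R mu hmu (x + 2 * pi * n%:~R) (x + 2 * pi * m%:~R) nP.
rewrite !expmi_int => /(_ erefl).
have -> : (x + 2 * pi * m%:~R != x + 2 * pi * n%:~R).
  apply/eqP => /addrI /mulfI h; move: mn; rewrite (intr_inj (h _)) ?eqxx //.
  by rewrite mulf_neq0 // ?pnatr_eq0 // gt_eqF // pi_gt0.
move=> /(_ erefl) e; by move: mP; rewrite e ltxx.
Qed.
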